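(* Let $S$ be a hyperbolic Riemann surface with universal cover $\mathbb H^+$ and deck group action $\rho_{can}:\pi_1(S,x_0)\to PSL(2,\mathbb R)$, and let $T^1\mathcal F_{can}=(T^1\mathbb H^+\times\mathbb CP^1)/\pi_1(S,x_0)$ with action $\gamma\cdot(v,z)=(\rho_{can}(\gamma)_*v,\rho_{can}(\gamma)z)$. Let $X_{can}$ be the generator of the foliated geodesic flow (induced by $(X,0)$, $X$ the geodesic flow generator on $T^1\mathbb H^+$) and $Y$ the vertical vector field induced by $\tilde Y$. Then the vector field $Z=X_{can}+Y$ is tangent to the diagonal $\Delta_*(T^1S)\subset T^1\mathcal F_{can}$.
   Context: Let $\iota:\mathbb H^+\to\mathbb CP^1$ be the inclusion. For $v\in T^1\mathbb H^+$ based at $p$, $\tilde\sigma^\pm(v)\in\partial\mathbb H^+$ are the forward/backward endpoints of the geodesic tangent to $v$, and $Y_v$ is the holomorphic vector field on $\mathbb CP^1$ vanishing at $\tilde\sigma^\pm(v)$ with $Y_v(\iota(p))=\iota_*(v)$; $\tilde Y(v,\cdot)=Y_v(\cdot)$. The diagonal $\Delta_*(T^1S)$ is the image in the quotient of $\{(v,\iota(p)):v\in T^1_p\mathbb H^+\}$. *)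

(* Defs.v *)
(* Everything is formalized on the universal
   cover  T^1 H^+ x CP^1. *)
From Stdlib Require Import Reals.
From Coquelicot Require Import Coquelicot.
Open Scope R_scope.

Definition in_Hplus (p : C) : Prop := 0 < Im p.

(* Unit tangent bundle T^1 H^+ : a pair (p, w), w a tangent vector at p
   (identified with a complex number) of hyperbolic length
   |w| / Im p = 1 for the metric |dz|^2 / (Im z)^2. *)
Definition in_T1H (v : C * C) : Prop :=
  in_Hplus (fst v) /\ Cmod (snd v) = Im (fst v).

(* The geodesic equations
     x'' - (2/y) x' y' = 0,   y'' + (x'^2 - y'^2)/y = 0
   are written in complex form  gam'' = - i (gam')^2 / Im gam. *)
Definition hyp_geodesic (gam gam1 gam2 : R -> C) : Prop :=
  (forall t, in_Hplus (gam t)) /\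
  (forall t, is_derive gam t (gam1 t)) /\
  (forall t, is_derive gam1 t (gam2 t)) /\
  (forall t, gam2 t = Cmult (Copp Ci) (Cmult (gam1 t) (gam1 t)) / RtoC (Im (gam t)))%C.

(* Boundary points of H^+ in CP^1 : R u {oo}; [Some a] = a in R,
   [None] = oo. *)
Definition bdry_pt := option R.

(* The curve gam tends to the boundary point e along the filter F
   (F = Rbar_locally p_infty for the forward endpoint,
    F = Rbar_locally m_infty for the backward endpoint). *)
Definition tends_to_bdry (gam : R -> C) (F : (R -> Prop) -> Prop) (e : bdry_pt)
  : Prop :=
  match e with
  | Some a => filterlim gam F (locally (RtoC a))
  | None => filterlim (fun t => Cmod (gam t)) F (Rbar_locally p_infty)
  end.

(* Holomorphic vector fields on CP^1: in the affine chart z they are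
   exactly  Y(z) = (c0 + c1 z + c2 z^2) d/dz ;  we represent Y by (c0,c1,c2). *)
Definition hvf := (C * C * C)%type.

Definition hvf_eval (Y : hvf) (z : C) : C :=
  let '(c0, c1, c2) := Y in (c0 + c1 * z + c2 * (z * z))%C.

(* Y vanishes at the point e of R u {oo} (at oo: in the chart u = 1/z the
   field is -(c0 u^2 + c1 u + c2) d/du, which vanishes at u = 0 iff c2 = 0). *)
Definition hvf_vanishes_at (Y : hvf) (e : bdry_pt) : Prop :=
  match e with
  | Some a => hvf_eval Y (RtoC a) = 0%C
  | None => let '(_, _, c2) := Y in c2 = 0%C
  end.

(* The lifted diagonal {(v, iota(p)) : v in T^1_p H^+}, a subset of
   T^1 H^+ x CP^1; it lies in the affine chart C of CP^1. *)
Definition diagonal (q : (C * C) * C) : Prop :=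
  in_T1H (fst q) /\ snd q = fst (fst q).

Definition tangent_to (D : (C * C) * C -> Prop) (q0 xi : (C * C) * C) : Prop :=
  exists c : R -> (C * C) * C,
    (forall t, D (c t)) /\ c 0 = q0 /\ is_derive c 0 xi.

(* Main.v *)
Require Import Defs.
From Stdlib Require Import Reals Lra Psatz.
From Coquelicot Require Import Coquelicot.
Open Scope R_scope.

Lemma der_l {V : NormedModule R_AbsRing} (f : R -> V) x l l' :
  is_derive f x l -> l = l' -> is_derive f x l'.
Proof. intros H ->; exact H. Qed.

Lemma der_lR (f : R -> R) (x l l' : R) :
  is_derive f x l -> l = l' -> is_derive f x l'.
Proof. intros H ->; exact H. Qed.

Lemma der_pair {U V : NormedModule R_AbsRing} (f : R -> U) (g : R -> V) x a b :
  is_derive f x a -> is_derive g x b -> is_derive (fun t => (f t, g t)) x (a, b).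
Proof.
  intros Hf Hg.
  unfold is_derive.
  eapply filterdiff_ext_lin.
  - apply (filterdiff_comp'_2 f g (fun u v => (u, v)) x _ _ (fun u v => (u, v)) Hf Hg).
    apply filterdiff_linear. apply is_linear_prod; [apply is_linear_fst|apply is_linear_snd].
  - intros y. reflexivity.
Qed.

Lemma der_fst {U V : NormedModule R_AbsRing} (f : R -> U * V) x l :
  is_derive f x l -> is_derive (fun t => fst (f t)) x (fst l).
Proof.
  intros Hf. unfold is_derive.
  eapply filterdiff_ext_lin.
  - apply (filterdiff_comp' f (fun t => fst t) x _ (fun t => fst t) Hf).
    apply filterdiff_linear; apply is_linear_fst.
  - intros y. reflexivity.
Qed.

Lemma der_snd {U V : NormedModule R_AbsRing} (f : R -> U * V) x l :
  is_derive f x l -> is_derive (fun t => snd (f t)) x (snd l).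
Proof.
  intros Hf. unfold is_derive.
  eapply filterdiff_ext_lin.
  - apply (filterdiff_comp' f (fun t => snd t) x _ (fun t => snd t) Hf).
    apply filterdiff_linear; apply is_linear_snd.
  - intros y. reflexivity.
Qed.

Lemma der_mult (f g : R -> R) x df dg :
  is_derive f x df -> is_derive g x dg ->
  is_derive (fun t => f t * g t) x (df * g x + f x * dg).
Proof.
  intros Hf Hg. exact (is_derive_mult f g x df dg Hf Hg Rmult_comm).
Qed.

Lemma der_plus (f g : R -> R) x df dg :
  is_derive f x df -> is_derive g x dg ->
  is_derive (fun t => f t + g t) x (df + dg).
Proof. intros Hf Hg. exact (is_derive_plus f g x df dg Hf Hg). Qed.

Lemma const_R (f : R -> R) : (forall t, is_derive f t 0) -> forall t, f t = f 0.
Proof.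
  intros H t. destruct (Rtotal_order t 0) as [Hl|[He|Hg]].
  - apply (eq_is_derive f t 0); [intros; apply H | exact Hl].
  - now subst.
  - symmetry. apply (eq_is_derive f 0 t); [intros; apply H | exact Hg].
Qed.

Lemma geod_unit (gam gam1 gam2 : R -> C) :
  hyp_geodesic gam gam1 gam2 -> Cmod (gam1 0) = Im (gam 0) ->
  forall t, Cmod (gam1 t) = Im (gam t).
Proof.
  intros [Hpos [H1 [H2 H3]]] H0 t.
  set (a := fun t => fst (gam1 t)).
  set (b := fun t => snd (gam1 t)).
  set (y := fun t => snd (gam t)).
  assert (Hy : forall t, 0 < y t) by (intro s; apply Hpos).
  assert (Dy : forall t, is_derive y t (b t)) by (intro s; apply (der_snd gam s), H1).
  assert (Da : forall t, is_derive a t (2 * a t * b t / y t)).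
  { intro s. eapply der_l. apply (der_fst gam1 s), H2.
    rewrite H3. unfold a, b, y. destruct (gam1 s) as [u v]. simpl.
    unfold Im. assert (0 < snd (gam s)) by apply Hpos. field. lra. }
  assert (Db : forall t, is_derive b t ((b t * b t - a t * a t) / y t)).
  { intro s. eapply der_l. apply (der_snd gam1 s), H2.
    rewrite H3. unfold a, b, y. destruct (gam1 s) as [u v]. simpl.
    unfold Im. assert (0 < snd (gam s)) by apply Hpos. field. lra. }
  set (f := fun t => (a t * a t + b t * b t) / (y t * y t)).
  assert (Df : forall t, is_derive f t 0).
  { intro s. unfold f. eapply der_lR.
    apply is_derive_div.
    - apply der_plus; apply der_mult; auto.
    - apply der_mult; auto.
    - specialize (Hy s). intro Hc. nra.
    - specialize (Hy s). cbv beta. field. lra. }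
  assert (Hf := const_R f Df t).
  assert (F0 : f 0 = 1).
  { unfold f, a, b, y. unfold Cmod, Im in H0.
    specialize (Hy 0). unfold y in Hy.
    assert (E : fst (gam1 0) ^ 2 + snd (gam1 0) ^ 2 = snd (gam 0) ^ 2).
    { rewrite <- H0. rewrite pow2_sqrt; [reflexivity|].
      apply Rplus_le_le_0_compat; apply pow2_ge_0. }
    apply (Rmult_eq_reg_r (snd (gam 0) * snd (gam 0))); [|nra].
    field_simplify; [nra|lra]. }
  rewrite F0 in Hf. unfold f in Hf.
  specialize (Hy t).
  assert (E : a t * a t + b t * b t = y t * y t).
  { apply (Rmult_eq_reg_r (/ (y t * y t))); [|apply Rinv_neq_0_compat; nra].
    rewrite Rinv_r; [exact Hf|nra]. }
  unfold Cmod, Im. fold (a t) (b t) (y t).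
  replace (a t ^ 2 + b t ^ 2) with (y t ^ 2) by (rewrite <- !Rsqr_pow2; unfold Rsqr; lra).
  apply sqrt_pow2. lra.
Qed.

Theorem proposition7p7 :
  forall (p w : C), in_T1H (p, w) ->
  forall gam gam1 gam2 : R -> C,
    hyp_geodesic gam gam1 gam2 -> gam 0 = p -> gam1 0 = w ->
  forall sp sm : bdry_pt,
    tends_to_bdry gam (Rbar_locally p_infty) sp ->
    tends_to_bdry gam (Rbar_locally m_infty) sm ->
  forall Y : hvf,
    hvf_vanishes_at Y sp -> hvf_vanishes_at Y sm -> hvf_eval Y p = w ->
    tangent_to diagonal ((p, w), p) ((gam1 0, gam2 0), hvf_eval Y p).
Proof.
  intros p w [Hp Hw] gam gam1 gam2 Hg E0 E1 sp sm _ _ Y _ _ HY.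
  rewrite HY.
  exists (fun t => ((gam t, gam1 t), gam t)).
  split; [|split].
  - intro t. split; [split|]; simpl.
    + apply (proj1 Hg).
    + apply (geod_unit gam gam1 gam2 Hg). simpl in Hw. now rewrite E0, E1.
    + reflexivity.
  - now rewrite E0, E1.
  - destruct Hg as [_ [H1 [H2 _]]].
    rewrite <- E1.
    exact (der_pair (fun t => (gam t, gam1 t)) gam 0 _ _
             (der_pair gam gam1 0 _ _ (H1 0) (H2 0)) (H1 0)).
Qed.
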